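(* Consider the setting described in the context, for a connected undirected graph $G=(V,E)$ with $N$ nodes, and assume $D>2$. For $t\ge 1$ define $\mathcal{I}_0(t)=\bigcup_{m=0}^{t-1}\mathcal{F}_0(m)$, $\mathcal{I}_1(t)=\Big(\bigcup_{m=0}^{t-1}\mathcal{F}_{D-1}(m)\Big)\setminus \mathcal{I}_0(t)$, $\mathcal{I}_2(t)=V\setminus(\mathcal{I}_0(t)\cup\mathcal{I}_1(t))$. Then for every $t\ge 1$: $a_i(t)\le 2N$ for all $i\in\mathcal{I}_0(t)$; $a_i(t)=1$ for all $i\in\mathcal{I}_1(t)$; and $a_i(t)\le N$ for all $i\in\mathcal{I}_2(t)$.
   Context: $G=(V,E)$ is a finite connected undirected graph with node set $V=\{0,\dots,N-1\}$; $\mathcal{N}(i)$ denotes the set of neighbours of $i$. Every edge has length $1$, $d_{ij}$ is the hop distance between $i$ and $j$, and $\mathcal{F}_k(m)=\{i\in V : d_{ik}=m\}$. Every node carries value $v_i=1$. The source set is $S(t)=\{D-1\}$ for $t\le 0$ and $S(t)=\{0\}$ for $t\ge 1$. The integer $D$ is the effective diameter of $G$ with respect to source $0$, i.e. $\max_{i\in V} d_{i0}=D-1$, and nodes are labelled so that $0,1,\dots,D-1$ is a path in which node $i$ is a neighbour of $i+1$ with $d_{0,i+1}=d_{0,i}+1$ (so $d_{0,i}=i$ for $0\le i\le D-1$). The algorithm (Adaptive Bellman–Ford with collection and monotonic filtering) updates, for $t\ge1$: $\hat d_i(t)=0$ if $i\in S(t)$, and $\hat d_i(t)=\min_{j\in\mathcal{N}(i)}\{\hat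 d_j(t-1)+1\}$ otherwise; $c_i(t)=i$ if $i\in S(t)$, and otherwise $c_i(t)$ is a minimizer $j\in\mathcal{N}(i)$ of $\hat d_j(t-1)+1$; $C_i(t)=\{j : c_j(t-1)=i \text{ and } \hat d_j(t-1)=\hat d_i(t)+1\}$; $a_i(t)=\sum_{j\in C_i(t)}a_j(t-1)+v_i$. Initial values at $t=0$: $(\hat d_i(0),c_i(0),a_i(0))_{i\in V}$ are steady-state (fixed-point) values of these recursions when the source set is constantly $\{D-1\}$; in particular $\hat d_i(0)=m$ for all $i\in\mathcal{F}_{D-1}(m)$, and for every integer $m$, $\sum_{i\in\mathcal{F}_{D-1}(m)}a_i(0)\le N$. *)

(* Defs.v *)
From mathcomp Require Import all_boot all_order.
Set Implicit Arguments. Unset Strict Implicit. Unset Printing Implicit Defensive.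

Section Graph.
Variable T : finType.
Variable e : rel T.

Fixpoint ball (n : nat) (i : T) : {set T} :=
  match n with
  | 0 => [set i]
  | n'.+1 => ball n' i :|: [set y | [exists x in ball n' i, e x y]]
  end.

(* hop distance d_{ij}: least n with j in ball n i (for a connected graph
   this is < #|T|; unreachable pairs would get #|T|). *)
Definition dist (i j : T) : nat := find (fun n => j \in ball n i) (iota 0 #|T|).

(* C_i(t) given the parent pointers cprev = c(t-1), the estimates
   dprev = dhat(t-1) and the new estimate dnew_i = dhat_i(t) *)
Definition collect (cprev : T -> T) (dprev : T -> nat) (dnew_i : nat) (i : T)
  : {set T} := [set j | (cprev j == i) && (dprev j == dnew_i.+1)].
End Graph.

(* Main.v *)
Require Import Defs.
From mathcomp Require Import all_boot all_order.
From mathcomp Require Import zify.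
Set Implicit Arguments. Unset Strict Implicit. Unset Printing Implicit Defensive.
Definition cnt (T : finType) (P : pred T) := \sum_(x : T) (P x : nat).
Section D.
Variable T : finType.
Variable e : rel T.

Lemma ball_sub n x : ball e n x \subset ball e n.+1 x.
Proof. by rewrite /= subsetUl. Qed.

Lemma ball_mono n m x : n <= m -> ball e n x \subset ball e m x.
Proof.
move=> /subnK <-; elim: (m - n) => [|k IH] //=.
exact: subset_trans IH (ball_sub _ _).
Qed.

Lemma ballS n x : ball e n.+1 x = ball e n x :|: [set y | [exists w in ball e n x, e w y]].
Proof. by []. Qed.

Lemma in_ballS n x z : (z \in ball e n.+1 x) = (z \in ball e n x) || [exists w in ball e n x, e w z].
Proof. by rewrite ballS in_setU in_set. Qed.

Lemma ball_step k x y z : e x y -> z \in ball e k y -> z \in ball e k.+1 x.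
Proof.
move=> exy; elim: k z => [|k IH] z.
  rewrite in_ballS /= !in_set1 => /eqP ->; apply/orP; right.
  by apply/existsP; exists x; rewrite in_set1 eqxx.
rewrite in_ballS => /orP [H|/existsP [w /andP [Hw ew]]]; rewrite in_ballS.
  by rewrite (IH _ H).
apply/orP; right; apply/existsP; exists w; by rewrite IH.
Qed.

Lemma ball_first k x z : z \in ball e k.+1 x ->
  z \in ball e k x \/ exists y, e x y /\ z \in ball e k y.
Proof.
elim: k z => [|k IH] z.
  rewrite in_ballS => /orP [H|/existsP [w /andP [Hw ew]]]; first by left.
  move: Hw; rewrite /= in_set1 => /eqP Hw; subst w; right; exists z; by rewrite ew /= in_set1.
rewrite in_ballS => /orP [H|/existsP [w /andP [Hw ew]]]; first by left.
case: (IH _ Hw) => [Hw'|[y [exy Hy]]].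
  left; rewrite in_ballS; apply/orP; right; apply/existsP; exists w; by rewrite Hw' ew.
right; exists y; split => //; rewrite in_ballS; apply/orP; right.
apply/existsP; exists w; by rewrite Hy ew.
Qed.

Lemma dist_le x s : dist e x s <= #|T|.
Proof. by rewrite /dist -{2}(size_iota 0 #|T|) find_size. Qed.

Lemma dist_ball x s : dist e x s < #|T| -> s \in ball e (dist e x s) x.
Proof.
move=> H; rewrite /dist in H *.
have Hh : has (fun n => s \in ball e n x) (iota 0 #|T|) by rewrite has_find size_iota.
have := nth_find 0 Hh.
by rewrite nth_iota.
Qed.

Lemma dist_min x s n : n < #|T| -> s \in ball e n x -> dist e x s <= n.
Proof.
move=> Hn Hb; rewrite leqNgt; apply/negP => H.
have := before_find 0 H (a := fun n => s \in ball e n x).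
by rewrite nth_iota // add0n Hb.
Qed.

Lemma dist_self s : dist e s s = 0.
Proof.
apply/eqP; rewrite -leqn0; apply: dist_min; last by rewrite /= inE.
by apply/card_gt0P; exists s.
Qed.

Lemma dist0 x s : dist e x s = 0 -> x = s.
Proof.
move=> H.
have Hp : 0 < #|T| by apply/card_gt0P; exists x.
have := dist_ball (x := x) (s := s); rewrite H => /(_ Hp).
by rewrite /= inE => /eqP.
Qed.

Lemma dist_edge x y s : e x y -> dist e x s <= (dist e y s).+1.
Proof.
move=> exy.
case: (ltnP (dist e y s).+1 #|T|) => H; last exact: leq_trans (dist_le _ _) H.
apply: dist_min => //; apply: ball_step exy _; apply: dist_ball.
exact: ltnW.
Qed.

Lemma dist_lt x s : connect e x s -> dist e x s < #|T|.
Proof.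
case/connectP => p Hp ->.
case/shortenP: Hp => p' Hp' Hu _.
have Hs : size p' < #|T|.
  by have := max_card (mem (x :: p')); rewrite (card_uniqP Hu).
have Hb : last x p' \in ball e (size p') x.
  clear Hu Hs; elim: p' x Hp' => [|y q IH] x /=; first by rewrite in_set1.
  move=> /andP [exy Hq]; exact: ball_step exy (IH _ Hq).
exact: leq_ltn_trans (dist_min Hs Hb) Hs.
Qed.

Lemma dist_pred x s : connect e x s -> 0 < dist e x s ->
  exists y, e x y /\ (dist e y s).+1 = dist e x s.
Proof.
move=> Hc Hpos.
have Hl := dist_lt Hc.
have Hb := dist_ball Hl.
move: Hb Hpos Hl; case Ek: (dist e x s) => [|k] // Hb _ Hl.
have Hk1 : k < #|T| by apply: ltnW.
case: (ball_first Hb) => [Hk|[y [exy Hy]]].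
  by have := dist_min Hk1 Hk; rewrite Ek ltnn.
exists y; split => //.
have Hyk : dist e y s <= k by apply: dist_min Hy.
have := dist_edge s exy; rewrite Ek => Hk'.
by apply/eqP; rewrite eqSS eqn_leq Hyk.
Qed.
End D.
Lemma rec_le (T : finType) (A B : pred T) (p : T -> T) (Ch : T -> pred T) (F : T -> nat) :
 (forall i j, A i -> Ch i j -> B j /\ p j = i) ->
 \sum_(i | A i) \sum_(j | Ch i j) F j <= \sum_(j | B j) F j.
Proof.
move=> H.
rewrite (eq_bigr (fun i => \sum_j (Ch i j) * F j)); last first.
  by move=> i _; rewrite big_mkcond; apply: eq_bigr => j _; case: (Ch i j); rewrite ?mul1n ?mul0n.
rewrite exchange_big [X in _ <= X]big_mkcond /=; apply: leq_sum => j _.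
case Bj: (B j).
  apply: (@leq_trans (\sum_(i | i == p j) F j)); last by rewrite big_pred1_eq.
  rewrite big_mkcond [X in _ <= X]big_mkcond /=; apply: leq_sum => i _.
  case Ai: (A i); case Cij: (Ch i j); rewrite ?mul0n ?mul1n //.
  by case: (H _ _ Ai Cij) => _ ->; rewrite eqxx.
rewrite big1 // => i Ai; case Cij: (Ch i j); rewrite ?mul0n //.
by case: (H _ _ Ai Cij); rewrite Bj.
Qed.

Lemma cnt_add (T : finType) (R P Q : pred T) :
  (forall x, R x = P x || Q x) -> (forall x, ~~ (P x && Q x)) -> cnt R = cnt P + cnt Q.
Proof.
move=> H1 H2; rewrite /cnt -big_split /=; apply: eq_bigr => x _.
by move: (H1 x) (H2 x); case: (P x); case: (Q x); case: (R x).
Qed.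

Lemma cnt_le (T : finType) (P Q : pred T) : (forall x, P x -> Q x) -> cnt P <= cnt Q.
Proof.
move=> H; rewrite /cnt; apply: leq_sum => x _.
by move: (H x); case: (P x); case: (Q x) => // /(_ isT).
Qed.

Lemma cnt_true (T : finType) : cnt (fun _ : T => true) = #|T|.
Proof. by rewrite /cnt sum1_card. Qed.

Lemma cnt_card (T : finType) (P : pred T) : cnt P <= #|T|.
Proof. by rewrite -cnt_true; apply: cnt_le. Qed.

Lemma sum1_cnt (T : finType) (P : pred T) : \sum_(i | P i) 1 = cnt P.
Proof. by rewrite /cnt big_mkcond; apply: eq_bigr => i _; case: (P i). Qed.

Lemma cnt_compl (T : finType) (P : pred T) : cnt P + cnt (predC P) = #|T|.
Proof.
rewrite -cnt_true; symmetry; apply: cnt_add => x /=; first by case: (P x).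
by case: (P x).
Qed.

Lemma le_sum_one (T : finType) (P : pred T) (F : T -> nat) i :
  P i -> F i <= \sum_(j | P j) F j.
Proof. by move=> Pi; rewrite (bigD1 i) //= leq_addr. Qed.

Unset Implicit Arguments.
Set Strict Implicit.
Set Printing Implicit Defensive.

Theorem theorem2
  (N : nat) (e : rel 'I_N)
  (e_sym : symmetric e) (e_irr : irreflexive e)
  (e_conn : forall i j : 'I_N, connect e i j)
  (D : nat) (hD : 2 < D) (hDN : D <= N)
  (s0 sD : 'I_N) (hs0 : val s0 = 0) (hsD : val sD = D.-1)
  (* nodes 0,...,D-1 form a path with d_{0,i} = i *)
  (hpath : forall k k' : 'I_N, val k' = (val k).+1 -> val k' < D -> e k k')
  (hpathd : forall k : 'I_N, val k < D -> dist e s0 k = val k)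
  (* effective diameter: max_i d_{i0} = D-1 *)
  (hdiam : forall i : 'I_N, dist e i s0 <= D.-1)
  (dhat : nat -> 'I_N -> nat) (c : nat -> 'I_N -> 'I_N) (a : nat -> 'I_N -> nat)
  (* initial steady state for source set {D-1} *)
  (hd0 : forall i, dhat 0 i = dist e i sD)
  (hc0s : c 0 sD = sD)
  (hc0 : forall i, i != sD ->
     [/\ e i (c 0 i), dhat 0 i = (dhat 0 (c 0 i)).+1
       & forall j, e i j -> dhat 0 i <= (dhat 0 j).+1])
  (ha0 : forall i, a 0 i =
     (\sum_(j in collect (c 0) (dhat 0) (dhat 0 i) i) a 0 j) + 1)
  (hsum0 : forall m, \sum_(i | dist e i sD == m) a 0 i <= N)
  (* updates for t >= 1, source set {0} *)
  (hds : forall t, 1 <= t -> dhat t s0 = 0 /\ c t s0 = s0)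
  (hdt : forall t, 1 <= t -> forall i, i != s0 ->
     [/\ e i (c t i), dhat t i = (dhat t.-1 (c t i)).+1
       & forall j, e i j -> dhat t i <= (dhat t.-1 j).+1])
  (hat : forall t, 1 <= t -> forall i, a t i =
     (\sum_(j in collect (c t.-1) (dhat t.-1) (dhat t i) i) a t.-1 j) + 1) :
  forall t, 1 <= t ->
    (forall i, dist e i s0 < t -> a t i <= 2 * N) /\
    (forall i, t <= dist e i s0 -> dist e i sD < t -> a t i = 1) /\
    (forall i, t <= dist e i s0 -> t <= dist e i sD -> a t i <= N).
Proof.
have HN : #|'I_N| = N by rewrite card_ord.
pose de i := dist e i s0; pose dr i := dist e i sD.
have Hde0 : de s0 = 0 by apply: dist_self.
have Hdeq : forall i, de i = 0 -> i = s0 by move=> i; apply: dist0.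
have Hedge : forall x y, e x y -> de x <= (de y).+1 /\ dr x <= (dr y).+1.
  by move=> x y exy; split; apply: dist_edge.
have Hpar : forall t j, c t j = j \/ (e j (c t j) /\ dhat t j = (dhat t.-1 (c t j)).+1).
  move=> [|t] j.
    case: (eqVneq j sD) => [->|Hj]; first by left.
    by case: (hc0 j Hj) => H1 H2 _; right.
  case: (eqVneq j s0) => [->|Hj]; first by left; case: (hds t.+1 isT).
  by case: (hdt t.+1 isT j Hj) => H1 H2 _; right.
have Hpd : forall t j, de (c t j) <= (de j).+1.
  move=> t j; case: (Hpar t j) => [->|[ej _]] //.
  by rewrite e_sym in ej; case: (Hedge _ _ ej).
have Low : forall t i, (t <= de i -> maxn t (dr i) <= dhat t i) /\
                       (de i < t -> de i <= dhat t i).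
  elim=> [|t IH] i.
    by rewrite hd0; split => // _; rewrite max0n.
  case: (eqVneq i s0) => [->|Hi]; first by rewrite Hde0.
  case: (hdt t.+1 isT i Hi) => ej -> _ /=.
  case: (Hedge _ _ ej) => H1 H2.
  have [IH1 IH2] := IH (c t.+1 i).
  split => Ht.
    have := IH1 ltac:(lia); lia.
  case: (leqP t (de (c t.+1 i))) => Hc.
    have := IH1 Hc; lia.
  have := IH2 Hc; lia.
have UpIn : forall t i, de i < t -> dhat t i <= de i.
  elim=> [|t IH] i //.
  case: (eqVneq i s0) => [->|Hi] Ht; first by case: (hds t.+1 isT) => ->.
  have Hpos : 0 < de i by rewrite lt0n; apply/eqP => /Hdeq; apply/eqP.
  case: (dist_pred (e_conn i s0) Hpos) => y [ey Hy].
  case: (hdt t.+1 isT i Hi) => _ _ /(_ y ey) /=.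
  have := IH y; rewrite /de in Ht Hpos *; lia.
have Up : forall t i, dhat t i <= maxn (dr i) t.+1.
  elim=> [|t IH] i.
    by rewrite hd0 leq_maxl.
  case: (eqVneq i s0) => [->|Hi]; first by case: (hds t.+1 isT) => ->.
  case: (hdt t.+1 isT i Hi) => _ _ Hmin; rewrite /= in Hmin.
  case: (posnP (dr i)) => Hr.
    have Hpos : 0 < de i by rewrite lt0n; apply/eqP => /Hdeq; apply/eqP.
    case: (dist_pred (e_conn i s0) Hpos) => y [ey _].
    have := Hmin y ey; have := IH y.
    rewrite e_sym in ey; case: (Hedge _ _ ey) => _; rewrite /dr in Hr *; lia.
  case: (dist_pred (e_conn i sD) Hr) => y [ey Hy].
  have := Hmin y ey; have := IH y; rewrite /dr in Hr *; lia.
have S0 : forall d, \sum_(i | dr i == d) a 0 i <= cnt (fun x => d <= dr x).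
  have : forall n d, #|'I_N| < d + n -> \sum_(i | dr i == d) a 0 i <= cnt (fun x => d <= dr x).
    elim=> [|n IH] d Hd.
      rewrite big_pred0 // => i; apply/negP => /eqP Hi.
      have := dist_le e i sD; rewrite /dr in Hi; rewrite card_ord in Hd *; lia.
    rewrite (eq_bigr (fun i => \sum_(j in collect (c 0) (dhat 0) (dhat 0 i) i) a 0 j + 1));
      last by move=> i _; rewrite ha0.
    rewrite big_split /= sum1_cnt.
    have H1 := IH d.+1 ltac:(lia).
    have H2 := @rec_le _ (fun i => dr i == d) (fun j => dr j == d.+1) (c 0)
       (fun i j => j \in collect (c 0) (dhat 0) (dhat 0 i) i) (a 0).
    have {}H2 : \sum_(i | dr i == d) \sum_(j in collect (c 0) (dhat 0) (dhat 0 i) i) a 0 j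
       <= \sum_(j | dr j == d.+1) a 0 j.
      apply: H2 => i j /eqP Hi; rewrite /collect in_set => /andP [/eqP Hc /eqP Hd'].
      by split => //; rewrite !hd0 in Hd'; rewrite /dr Hd' -/(dr i) Hi.
    rewrite (@cnt_add _ (fun x => d <= dr x) (fun x => dr x == d) (fun x => d.+1 <= dr x)).
    - by rewrite addnC; apply: leq_add => //; apply: leq_trans H2 H1.
    - by move=> x; rewrite leq_eqVlt eq_sym.
    - by move=> x; apply/negP => /andP [/eqP -> ]; rewrite ltnn.
  by move=> H d; apply: (H (#|'I_N|.+1)); lia.
have RS : forall t (A B : pred 'I_N),
    (forall i j, A i -> c t j = i -> dhat t j = (dhat t.+1 i).+1 -> B j) ->
    \sum_(i | A i) a t.+1 i <= cnt A + \sum_(j | B j) a t j.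
  move=> t A B HAB.
  rewrite (eq_bigr (fun i => \sum_(j in collect (c t) (dhat t) (dhat t.+1 i) i) a t j + 1));
    last by move=> i _; rewrite (hat t.+1 isT).
  rewrite big_split /= sum1_cnt addnC leq_add2l.
  apply: (@rec_le _ A B (c t) (fun i j => j \in collect (c t) (dhat t) (dhat t.+1 i) i) (a t)).
  move=> i j Ai; rewrite /collect in_set => /andP [/eqP Hc /eqP Hd'].
  by split => //; apply: (HAB i j).
have Hcomp : forall d, cnt (fun x => dr x <= d) + cnt (fun x => d.+1 <= dr x) = N.
  move=> d; apply: etrans (etrans (cnt_compl (fun x : 'I_N => dr x <= d)) HN); congr (_ + _).
  by apply: eq_bigr => x _ /=; rewrite -ltnNge.
have Out : forall t d,
    (t.+2 <= d -> \sum_(i | (t <= de i) && (dhat t i == d)) a t i <= cnt (fun x => d <= dr x)) /\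
    (t <= d -> \sum_(i | (t <= de i) && (dhat t i == d)) a t i <= N).
  elim=> [|t IH] d.
    have E : \sum_(i | (0 <= de i) && (dhat 0 i == d)) a 0 i = \sum_(i | dr i == d) a 0 i.
      by apply: eq_bigl => i; rewrite hd0.
    rewrite E; split => _; first exact: S0.
    apply: leq_trans (S0 d) _; apply: leq_trans (cnt_card (fun x : 'I_N => d <= dr x)) _; by rewrite HN.
  have HR := RS t (fun i => (t.+1 <= de i) && (dhat t.+1 i == d))
                  (fun j => (t <= de j) && (dhat t j == d.+1)).
  have {}HR : \sum_(i | (t.+1 <= de i) && (dhat t.+1 i == d)) a t.+1 i <=
      cnt (fun i => (t.+1 <= de i) && (dhat t.+1 i == d)) +
      \sum_(j | (t <= de j) && (dhat t j == d.+1)) a t j.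
    apply: HR => i j /andP [Hi /eqP Hd] Hc Hdj; apply/andP; split; last by rewrite Hdj Hd.
    have := Hpd t j; rewrite Hc; lia.
  split => Hd.
    have [H1 _] := IH d.+1; have {}H1 := H1 ltac:(lia).
    apply: leq_trans HR _.
    rewrite (@cnt_add _ (fun x => d <= dr x) (fun x => dr x == d) (fun x => d.+1 <= dr x)).
    - apply: leq_add => //; apply: cnt_le => x /andP [Hx /eqP Hdx].
      have := (Low t.+1 x).1 Hx; have := Up t.+1 x; rewrite Hdx; lia.
    - by move=> x; rewrite leq_eqVlt eq_sym.
    - by move=> x; apply/negP => /andP [/eqP -> ]; rewrite ltnn.
  have [H1 _] := IH d.+1; have {}H1 := H1 ltac:(lia).
  apply: leq_trans HR (leq_trans _ (eq_leq (Hcomp d))); apply: leq_add => //.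
  apply: cnt_le => x /andP [Hx /eqP Hdx].
  have := (Low t.+1 x).1 Hx; rewrite Hdx; lia.
have In : forall t, 1 <= t -> forall d, d < t ->
    \sum_(i | de i == d) a t i <= cnt (fun x => d <= de x) + N.
  elim=> [|t IH] // _ d Hdt.
  have Hdi : forall i, de i = d -> dhat t.+1 i = d.
    move=> i Hi; apply/eqP; rewrite eqn_leq.
    have := UpIn t.+1 i; have := (Low t.+1 i).2; rewrite Hi => H1 H2.
    by rewrite H2 // H1.
  have Hsplit : cnt (fun x => d <= de x) = cnt (fun x => de x == d) + cnt (fun x => d.+1 <= de x).
    apply: cnt_add; first by move=> x; rewrite leq_eqVlt eq_sym.
    by move=> x; apply/negP => /andP [/eqP -> ]; rewrite ltnn.
  case: (ltnP d.+1 t) => Hc.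
    have HR := RS t (fun i => de i == d) (fun j => de j == d.+1).
    apply: leq_trans (HR _) _.
      move=> i j /eqP Hi Hcj Hdj; rewrite Hdi // in Hdj.
      case: (leqP t (de j)) => Hj.
        have := (Low t j).1 Hj; rewrite Hdj; lia.
      have := UpIn t j Hj; have := (Low t j).2 Hj; rewrite Hdj => H1 H2.
      apply/eqP; lia.
    have := IH ltac:(lia) d.+1 Hc; rewrite Hsplit => H; rewrite -addnA; exact: leq_add (leqnn _) H.
  have HR := RS t (fun i => de i == d) (fun j => (t <= de j) && (dhat t j == d.+1)).
  apply: leq_trans (HR _) _.
    move=> i j /eqP Hi Hcj Hdj; rewrite Hdi // in Hdj; rewrite Hdj eqxx andbT.
    case: (leqP t (de j)) => // Hj.
    have := UpIn t j Hj; have := (Low t j).2 Hj; rewrite Hdj; lia.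
  have := (Out t d.+1).2 Hc; rewrite Hsplit => H; rewrite -addnA; apply: leq_add (leqnn _) _; exact: leq_trans H (leq_addl _ _).
case=> [|t] // _; split; last split.
- move=> i Hi.
  have H := In t.+1 isT (de i) Hi.
  apply: leq_trans (le_sum_one (P := fun j => de j == de i) (a t.+1) (eqxx (de i))) _.
  apply: leq_trans H _.
  have := cnt_card (fun x => de i <= de x); rewrite HN; lia.
- move=> i Hi Hr.
  rewrite (hat t.+1 isT) /= big_pred0 // => j.
  rewrite /collect in_set; apply/negP => /andP [/eqP Hc /eqP Hdj].
  have := (Low t.+1 i).1 Hi => Hl.
  case: (Hpar t j) => [Hcj|[ej Hdj']].
    rewrite Hcj in Hc; subst j.
    have := Up t i; rewrite /dr in Hl *; lia.
  rewrite Hc in Hdj'.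
  case: t Hi Hr Hc Hdj Hdj' Hl ej => [|t] Hi Hr Hc Hdj Hdj' Hl ej /=.
    rewrite /= !hd0 in Hdj Hdj'; rewrite /dr in Hl *; lia.
  have := Up t i; rewrite /= in Hdj'; rewrite /dr in Hl *; lia.
- move=> i Hi Hr.
  have Hl := (Low t.+1 i).1 Hi.
  have [_ H] := Out t.+1 (dhat t.+1 i).
  apply: leq_trans (H ltac:(lia)).
  apply: (le_sum_one (P := fun j => (t.+1 <= de j) && (dhat t.+1 j == dhat t.+1 i)) (a t.+1)).
  by rewrite Hi eqxx.
Qed.
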